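(* Let $G$ be a finite group and $M$ a $\mathbb{B}[G]$-module generated by $n$ elements. Let $P\subseteq M$ be the poset of join-irreducible elements of $M$. Then $P$ does not contain a chain of length greater than $n$ (i.e. no totally ordered subset of $P$ has more than $n$ elements).
   Context: $\mathbb{B}=\{0,1\}$ is the Boolean semifield with $1+1=1$; $\mathbb{B}[G]$ is the group semiring. A $\mathbb{B}$-module is partially ordered by $x\le y$ iff $x+y=y$. An element $v$ is join-irreducible if $v\neq0$ and $v=a+b$ implies $v=a$ or $v=b$. *)

(* Defs.v *)
From HB Require Import structures.
From mathcomp Require Import all_boot all_fingroup.
Set Implicit Arguments. Unset Strict Implicit. Unset Printing Implicit Defensive.

(* A B[G]-module, for B the Boolean semifield and G a finite group.
   Unfolded: an additive commutative monoid (M,+,0) that is a B-module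
   (hence idempotent, x + x = (1+1)x = x), with the group elements of
   G acting by additive monoid endomorphisms (1 acts as identity,
   (gh)x = g(hx)).  A general scalar of B[G] is a subset S of G
   (a finite sum of group elements, coefficients in B), acting by
   S . x = sum_{g in S} g x : see [bscal] below. *)
Record BGModule (gT : finGroupType) := {
  carrier :> Type;
  madd : carrier -> carrier -> carrier;
  mzero : carrier;
  mact : gT -> carrier -> carrier;
  maddA : forall x y z, madd x (madd y z) = madd (madd x y) z;
  maddC : forall x y, madd x y = madd y x;
  madd0 : forall x, madd mzero x = x;
  maddxx : forall x, madd x x = x;
  mact1 : forall x, mact 1%g x = x;
  mactM : forall g h x, mact (g * h)%g x = mact g (mact h x);
  mactD : forall g x y, mact g (madd x y) = madd (mact g x) (mact g y);
  mact0 : forall g, mact g mzero = mzero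
}.

Section Defs.
Variables (gT : finGroupType) (M : BGModule gT).

Definition bscal (S : {set gT}) (x : M) : M :=
  \big[@madd _ M / @mzero _ M]_(g in S) mact g x.

Definition generated_by (n : nat) : Prop :=
  exists m : 'I_n -> M, forall x : M,
    exists S : 'I_n -> {set gT},
      x = \big[@madd _ M / @mzero _ M]_(i < n) bscal (S i) (m i).

Definition mle (x y : M) : Prop := madd x y = y.

Definition join_irreducible (v : M) : Prop :=
  v <> mzero M /\ forall a b : M, v = madd a b -> v = a \/ v = b.
End Defs.

(* Main.v *)
Require Import Defs.
From mathcomp Require Import all_boot all_fingroup.
From Stdlib Require Import ClassicalEpsilon.

Section H.
Variables (gT : finGroupType) (M : BGModule gT).

Lemma big_ji (T : Type) (r : seq T) (P : pred T) (F : T -> M) (v : M) :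
  join_irreducible v -> v = \big[@madd _ M/@mzero _ M]_(x <- r | P x) F x ->
  exists x, v = F x.
Proof.
move=> [v0 vj]; elim: r => [|x r IH]; first by rewrite big_nil.
rewrite big_cons; case: (P x) => // E.
by case: (vj _ _ E) => [->|]; [exists x | ].
Qed.

Lemma mle_act (g : gT) (x y : M) : mle x y -> mle (Defs.mact g x) (Defs.mact g y).
Proof. by rewrite /mle -mactD => ->. Qed.

Lemma mle_trans (x y z : M) : mle x y -> mle y z -> mle x z.
Proof. by rewrite /mle => Hxy Hyz; rewrite -Hyz maddA Hxy. Qed.

Lemma mle_anti (x y : M) : mle x y -> mle y x -> x = y.
Proof. by rewrite /mle => Hxy Hyx; rewrite -Hyx maddC. Qed.

Lemma mle_iter (t : gT) (x : M) : mle x (Defs.mact t x) ->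
  forall r, mle x (Defs.mact (t ^+ r) x).
Proof.
move=> H; elim=> [|r IH]; first by rewrite expg0 mact1 /mle maddxx.
rewrite expgS mactM; apply: (@mle_trans _ _ _ H); exact: (@mle_act t).
Qed.

Lemma fixed (t : gT) (x : M) : mle x (Defs.mact t x) -> Defs.mact t x = x.
Proof.
move=> H; apply: mle_anti; last by [].
have := @mle_act t _ _ (@mle_iter t x H (#[t]%g).-1).
by rewrite -mactM -expgS prednK ?order_gt0 // expg_order mact1.
Qed.
End H.

Theorem proposition4p13 (gT : finGroupType) (M : BGModule gT) (n : nat) :
  generated_by M n ->
  forall (k : nat) (c : 'I_k -> M),
    injective c ->
    (forall i, join_irreducible (c i)) ->
    (forall i j, mle (c i) (c j) \/ mle (c j) (c i)) ->
    k <= n.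
Proof.
move=> [m gen] k c cinj cji chain.
have ex j : {p : 'I_n * gT | c j = Defs.mact p.2 (m p.1)}.
  apply: constructive_indefinite_description.
  have [S HS] := gen (c j).
  have [i Hi] := @big_ji _ _ _ _ _ _ _ (cji j) HS.
  have [g Hg] := @big_ji _ _ _ _ _ _ _ (cji j) Hi.
  by exists (i, g).
pose f j := (sval (ex j)).1.
suff finj : injective f.
  by have := leq_card f finj; rewrite !card_ord.
move=> j l Efl.
have Hj : c j = Defs.mact (sval (ex j)).2 (m (f j)) by exact: svalP (ex j).
have Hl : c l = Defs.mact (sval (ex l)).2 (m (f j)) by rewrite Efl; exact: svalP (ex l).
set g := (sval (ex j)).2 in Hj; set h := (sval (ex l)).2 in Hl.
apply: cinj.
have Elj : c l = Defs.mact (h * g^-1) (c j) by rewrite Hj Hl -mactM mulgKV.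
have Ejl : c j = Defs.mact (g * h^-1) (c l) by rewrite Hj Hl -mactM mulgKV.
case: (chain j l) => H.
- by rewrite Elj fixed // -Elj.
- by rewrite Ejl fixed // -Ejl.
Qed.
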